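(* Let $u_{1,\theta_1}(z,r,t)$ and $u_{2,\theta_2}(z,r,t)$ be neural networks with parameters $\theta=(\theta_1,\theta_2)$. Define the ideal second-order MeanFlow loss $$L^*_{\mathrm{SOM}}(\theta)=\mathbb{E}_{t,r,z_t}\big[\|u_{1,\theta_1}(z_t,r,t)-\overline{v}(z_t,r,t)\|_2^2\big]+\mathbb{E}_{t,r,z_t}\big[\|u_{2,\theta_2}(z_t,r,t)-\overline{a}(z_t,r,t)\|_2^2\big],$$ with $t,r\sim\mathrm{Uniform}[0,1]$ and $z_t\sim p_t$, where $\overline{v}(z_t,r,t)=\frac{1}{t-r}\int_r^t v(z_\tau,\tau)\,\mathrm{d}\tau$ and $\overline{a}(z_t,r,t)=\frac{1}{t-r}\int_r^t a(z_\tau,\tau)\,\mathrm{d}\tau$. Define the second-order MeanFlow loss $$L_{\mathrm{SOM}}(\theta)=\mathbb{E}_{t,r,x,\epsilon}\big[\|u_{1,\theta_1}(z_t,r,t)-\overline{v}(z_t,r,t)\|_2^2\big]+\mathbb{E}_{t,r,x,\epsilon}\big[\|u_{2,\theta_2}(z_t,r,t)-\overline{a}(z_t,r,t)\|_2^2\big],$$ with $t,r\sim\mathrm{Uniform}[0,1]$, $x\sim p_{\mathrm{data}}$, $\epsilon\sim\mathcal{N}(\mu,\sigma^2I_d)$, $z_t=\alpha_t x+\beta_t\epsilon$, in which the targets (treated with a stop-gradient, i.e. not differentiated with respect to $\theta$) are computed through the relations $$\overline{v}(z_t,r,t)=v(z_t,t)-(t-r)\tfrac{\mathrm{d}}{\mathrm{d}t}\overline{v}(z_t,r,t),\qquad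 \overline{a}(z_t,r,t)=a(z_t,t)-(t-r)\tfrac{\mathrm{d}}{\mathrm{d}t}\overline{a}(z_t,r,t).$$ Then $L_{\mathrm{SOM}}(\theta)$ is equivalent to $L^*_{\mathrm{SOM}}(\theta)$.
   Context: Setting: $t\in[0,1]$; $\alpha_t,\beta_t:[0,1]\to\mathbb{R}$ are (twice differentiable) interpolation functions with $\alpha_0=\beta_1=1$, $\alpha_1=\beta_0=0$; $x\sim p_{\mathrm{data}}$ on $\mathbb{R}^d$, $\epsilon\sim\mathcal{N}(\mu,\sigma^2 I_d)$; trajectory $z_t=\alpha_t x+\beta_t\epsilon$, whose law is denoted $p_t$; conditional velocity $v_t=\frac{\mathrm{d}z_t}{\mathrm{d}t}$, conditional acceleration $a_t=\frac{\mathrm{d}^2z_t}{\mathrm{d}t^2}$; marginal velocity $v(z,t)=\mathbb{E}[v_t\mid z_t=z]$ and marginal acceleration $a(z,t)=\mathbb{E}[a_t\mid z_t=z]$. In the averages, $\tau\mapsto z_\tau$ is the trajectory through $z_t$ (with $\frac{\mathrm{d}z_\tau}{\mathrm{d}\tau}=v(z_\tau,\tau)$), and $\frac{\mathrm{d}}{\mathrm{d}t}$ is the total derivative in $t$ with $r$ held fixed. Functions are assumed sufficiently smooth. Two losses are called equivalent if they differ by a constant independent of $\theta$, i.e. they have the same gradient with respect to $\theta$. *)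

(* Defs.v *)
From HB Require Import structures.
From mathcomp Require Import all_boot all_order all_algebra.
From mathcomp Require Import all_classical all_reals all_analysis.
Set Implicit Arguments. Unset Strict Implicit. Unset Printing Implicit Defensive.
Import Order.TTheory GRing.Theory Num.Theory.
Import numFieldNormedType.Exports.
Local Open Scope classical_set_scope.
Local Open Scope ring_scope.

(* R^d is represented by d.-tuple R, which carries the product
   (coordinate-generated) sigma-algebra of MathComp-Analysis. *)
Section vectors.
Context {R : realType} {d : nat}.
Definition vadd (x y : d.-tuple R) : d.-tuple R := [tuple tnth x i + tnth y i | i < d].
Definition vsub (x y : d.-tuple R) : d.-tuple R := [tuple tnth x i - tnth y i | i < d].
Definition vscale (c : R) (x : d.-tuple R) : d.-tuple R := [tuple c * tnth x i | i < d].
Definition sqnorm (x : d.-tuple R) : R := \sum_(i < d) tnth x i ^+ 2.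
End vectors.

Definition oint {R : realType} (a b : R) (f : R -> R) : R :=
  if a <= b then Rintegral (@lebesgue_measure R) `[a, b] f
  else - Rintegral (@lebesgue_measure R) `[b, a] f.

Section flow_defs.
Context {R : realType} {d : nat}.
Implicit Types (w : d.-tuple R -> R -> d.-tuple R)
  (Phi : d.-tuple R -> R -> R -> d.-tuple R).

(* Phi z t tau = position at time tau of the trajectory of the marginal
   velocity field passing through z at time t. *)

(* average of the field w along the trajectory through z_t = z:
   wbar(z,r,t) = 1/(t-r) \int_r^t w(z_tau, tau) d tau,
   extended on the diagonal r = t by its limit w(z,t). *)
Definition avg_field w Phi (z : d.-tuple R) (r t : R) : d.-tuple R :=
  if r == t then w z t
  else [tuple (t - r)^-1 * oint r t (fun tau => tnth (w (Phi z t tau) tau) i) | i < d].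

(* the MeanFlow target  w(z_t,t) - (t - r) d/dt wbar(z_t,r,t),
   d/dt being the total derivative along the trajectory, r fixed *)
Definition mf_target w Phi (z : d.-tuple R) (r t : R) : d.-tuple R :=
  [tuple tnth (w z t) i
     - (t - r) * derive1 (fun s => tnth (avg_field w Phi (Phi z t s) r s) i) t | i < d].
End flow_defs.

Section prob_defs.
Context {R : realType} {dO : measure_display} {O : measurableType dO} {d : nat}.
Variable P : probability O R.

Definition cond_exp_version (Y Z : O -> d.-tuple R)
    (g : d.-tuple R -> d.-tuple R) : Prop :=
  measurable_fun [set: d.-tuple R] g /\
  forall i : 'I_d,
    P.-integrable [set: O] (fun om => (tnth (Y om) i)%:E) /\
    forall A : set (d.-tuple R), measurable A ->
      (\int[P]_(om in Z @^-1` A) (tnth (Y om) i)%:E =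
       \int[P]_(om in Z @^-1` A) (tnth (g (Z om)) i)%:E)%E.

(* Eps ~ N(mu, sigma^2 I_d): independent coordinates, Eps_i ~ N(mu_i, sigma^2) *)
Definition iso_gaussian (Eps : O -> d.-tuple R) (mu : d.-tuple R) (sigma : R) :=
  forall A : 'I_d -> set R, (forall i, measurable (A i)) ->
    P [set om | forall i, A i (tnth (Eps om) i)] =
    (\prod_(i < d) fine (normal_prob (tnth mu i) sigma (A i)))%:E.

Definition indep2 (X Y : O -> d.-tuple R) :=
  forall A B : set (d.-tuple R), measurable A -> measurable B ->
    P (X @^-1` A `&` Y @^-1` B) = (P (X @^-1` A) * P (Y @^-1` B))%E.
End prob_defs.

Definition interp {R : realType} {d : nat} {O : Type}
  (alpha beta : R -> R) (X Eps : O -> d.-tuple R) (t : R) : O -> d.-tuple R :=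
  fun om => vadd (vscale (alpha t) (X om)) (vscale (beta t) (Eps om)).

Definition L_SOM_star {R : realType} {d : nat} {dO} {O : measurableType dO}
  (P : probability O R) (alpha beta : R -> R) (X Eps : O -> d.-tuple R)
  (vbar abar : d.-tuple R -> R -> R -> d.-tuple R)
  (Th1 Th2 : Type) (u1 : Th1 -> d.-tuple R -> R -> R -> d.-tuple R)
  (u2 : Th2 -> d.-tuple R -> R -> R -> d.-tuple R) (th : Th1 * Th2) : \bar R :=
  (\int[@lebesgue_measure R]_(t in `[0%R, 1%R]) \int[@lebesgue_measure R]_(r in `[0%R, 1%R])
     \int[pushforward P (interp alpha beta X Eps t)]_(z in [set: d.-tuple R])
        (sqnorm (vsub (u1 th.1 z r t) (vbar z r t)))%:E
  + \int[@lebesgue_measure R]_(t in `[0%R, 1%R]) \int[@lebesgue_measure R]_(r in `[0%R, 1%R])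
     \int[pushforward P (interp alpha beta X Eps t)]_(z in [set: d.-tuple R])
        (sqnorm (vsub (u2 th.2 z r t) (abar z r t)))%:E)%E.

(* loss L_SOM: t, r ~ U[0,1], (x, eps) ~ P, z_t = alpha_t x + beta_t eps,
   targets given as (stop-gradient) functions tv, ta of (z_t, r, t) *)
Definition L_SOM {R : realType} {d : nat} {dO} {O : measurableType dO}
  (P : probability O R) (alpha beta : R -> R) (X Eps : O -> d.-tuple R)
  (tv ta : d.-tuple R -> R -> R -> d.-tuple R)
  (Th1 Th2 : Type) (u1 : Th1 -> d.-tuple R -> R -> R -> d.-tuple R)
  (u2 : Th2 -> d.-tuple R -> R -> R -> d.-tuple R) (th : Th1 * Th2) : \bar R :=
  (\int[@lebesgue_measure R]_(t in `[0%R, 1%R]) \int[@lebesgue_measure R]_(r in `[0%R, 1%R])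
     \int[P]_(om in [set: O])
        (sqnorm (vsub (u1 th.1 (interp alpha beta X Eps t om) r t)
                      (tv (interp alpha beta X Eps t om) r t)))%:E
  + \int[@lebesgue_measure R]_(t in `[0%R, 1%R]) \int[@lebesgue_measure R]_(r in `[0%R, 1%R])
     \int[P]_(om in [set: O])
        (sqnorm (vsub (u2 th.2 (interp alpha beta X Eps t om) r t)
                      (ta (interp alpha beta X Eps t om) r t)))%:E)%E.

Definition equiv_losses {R : realType} {Th : Type} (L1 L2 : Th -> \bar R) : Prop :=
  exists C : R, forall th, L1 th = (L2 th + C%:E)%E.

(* Main.v *)
Require Import Defs.
From HB Require Import structures.
From mathcomp Require Import all_boot all_order all_algebra.
From mathcomp Require Import all_classical all_reals all_analysis.
From mathcomp Require Import measurable_realfun.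
From mathcomp Require Import ring lra.
Import Order.TTheory GRing.Theory Num.Theory.
Import numFieldNormedType.Exports.
Local Open Scope classical_set_scope.
Local Open Scope ring_scope.



Lemma int_itv {R : realType} {f : R -> R} (cf : continuous f) (x y : R) : (@lebesgue_measure R).-integrable `[x, y] (EFin \o f).
Proof.
apply: continuous_compact_integrable; first exact: segment_compact.
exact: continuous_subspaceT.
Qed.

Definition Pr {R : realType} (f : R -> R) (a s : R) : R := Rintegral (@lebesgue_measure R) `[a, s] f.

Lemma Pr_split {R : realType} (f : R -> R) (cf : continuous f) (a x y : R) : a <= x -> x <= y ->
  Rintegral (@lebesgue_measure R) `[x, y] f = Pr f a y - Pr f a x.
Proof.
move=> ax xy; rewrite /Pr.
rewrite (@Rintegral_itvB _ f (BLeft a) (BRight y) x) //.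
  idtac.
  rewrite Rintegral_itv_obnd_cbnd //.
  apply: integrableS (int_itv cf x y) => //.
  exact: subset_itv_oc_cc.
exact: (int_itv cf).
Qed.

Lemma oint_Pr {R : realType} (f : R -> R) (cf : continuous f) (a x y : R) : a <= x -> a <= y -> oint x y f = Pr f a y - Pr f a x.
Proof.
move=> ax ay; rewrite /oint; case: ifP => xy.
  exact: (@Pr_split R f cf).
rewrite (@Pr_split R f cf a y x ay) ?opprB //.
by rewrite ltW // ltNge xy.
Qed.

Lemma Pr_derive {R : realType} (f : R -> R) (cf : continuous f) (a x : R) : a < x -> derivable (Pr f a) x 1 /\ derive1 (Pr f a) x = f x.
Proof.
move=> ax.
have := @continuous_FTC1_closed R f a x (x + 1) _ (int_itv cf a (x + 1)) ax (cf x).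
apply.
by rewrite ltrDl.
Qed.



Lemma dH {R : realType} (f : R -> R) (cf : continuous f) (a r t : R) : a < t -> r != t ->
  'D_1 (fun s => (s - r)^-1 * (Pr f a s - Pr f a r)) t
   = (t - r)^-1 * f t - (t - r)^-2 * (Pr f a t - Pr f a r).
Proof.
move=> hat rt.
have [dP eP] := @Pr_derive R f cf a t hat.
have d1 : is_derive t (1:R) (fun s : R => s - r) (1 - 0) :=
  is_deriveB (is_derive_id t 1) (is_derive_cst r t 1).
have tr0 : (fun s : R => s - r) t != 0.
  rewrite /= subr_eq0 eq_sym; exact: rt.
have e1 := @ex_derive _ _ _ _ _ _ _ d1.
have e2 := @derivableV R _ (fun s : R => s - r) t 1 tr0 e1.
have e3 := @deriveV R _ (fun s : R => s - r) t 1 tr0 e1.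
have d2 := @DeriveDef _ _ _ _ _ _ _ e2 e3.
have eP' : 'D_1 (Pr f a) t = f t by rewrite -derive1E.
have dP' := @DeriveDef _ _ _ _ _ _ _ dP eP'.
have d3 := is_deriveB dP' (is_derive_cst (Pr f a r) t 1).
have d4 := is_deriveM d2 d3.
have e4 := @derive_val _ _ _ _ _ _ _ d4.
Time rewrite e4.
rewrite (@derive_val _ _ _ _ _ _ _ d1).
rewrite /= /GRing.scale /=.
change ((Pr f a - cst (Pr f a r)) t) with (Pr f a t - Pr f a r).
ring.
Qed.


Lemma target_eq {R : realType} {d : nat} (w : d.-tuple R -> R -> d.-tuple R)
  (Phi : d.-tuple R -> R -> R -> d.-tuple R)
  (H0 : forall z t, Phi z t t = z)
  (Hf : forall z t s tau, Phi (Phi z t s) s tau = Phi z t tau)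
  (Hc : forall z t (i : 'I_d), continuous (fun tau => tnth (w (Phi z t tau) tau) i))
  z r t : mf_target w Phi z r t = avg_field w Phi z r t.
Proof.
apply: eq_from_tnth => i; rewrite tnth_mktuple.
have [<-|rt] := eqVneq r t.
  by rewrite /avg_field eqxx subrr mul0r subr0.
rewrite {2}/avg_field (negbTE rt) tnth_mktuple.
set fi := fun tau => tnth (w (Phi z t tau) tau) i.
have cf : continuous fi := Hc z t i.
set a := Num.min r t - 1.
have mr : Num.min r t <= r by rewrite ge_min lexx.
have mt : Num.min r t <= t by rewrite ge_min lexx orbT.
have ar : a <= r by rewrite /a; lra.
have hat : a < t by rewrite /a; lra.
have near_ne : \forall s \near t, s != r /\ a < s.
  have [tr|tr] := ltP t r.
    near=> s; split; last by near: s; exact: lt_nbhsr.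
    have : s < r by near: s; exact: lt_nbhsl.
    by rewrite lt_neqAle => /andP[].
  have rt' : r < t by rewrite lt_neqAle rt tr.
  near=> s; split; last by near: s; exact: lt_nbhsr.
  have : r < s by near: s; exact: lt_nbhsr.
  by rewrite lt_neqAle eq_sym => /andP[].
have Hnear : \forall s \near t,
   (fun s => tnth (avg_field w Phi (Phi z t s) r s) i) s =
   (fun s => (s - r)^-1 * (Pr fi a s - Pr fi a r)) s.
  near=> s.
  have [sr as_] : s != r /\ a < s by near: s; exact: near_ne.
  rewrite /= /avg_field eq_sym (negbTE sr) tnth_mktuple.
  congr (_ * _).
  rewrite -(@oint_Pr R fi cf a r s ar (ltW as_)).
  congr oint; apply/funext => tau; rewrite Hf //.
rewrite derive1E (near_eq_derive _ Hnear).
rewrite (@dH R fi cf a r t hat rt).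
rewrite (@oint_Pr R fi cf a r t ar (ltW hat)).
have -> : fi t = tnth (w z t) i by rewrite /fi H0.
have tr0 : t - r != 0 by rewrite subr_eq0 eq_sym.
field.
exact: tr0.
Unshelve. all: by end_near.
Qed.


Lemma meas_interp {R : realType} {d : nat} {dO} {O : measurableType dO}
  (alpha beta : R -> R) (X Eps : O -> d.-tuple R) t :
  measurable_fun [set: O] X -> measurable_fun [set: O] Eps ->
  measurable_fun [set: O] (interp alpha beta X Eps t).
Proof.
move=> mX mE; apply/measurable_fun_tnthP => i.
have -> : (@tnth d R ^~ i \o interp alpha beta X Eps t) =
  (fun om => alpha t * tnth (X om) i) \+ (fun om => beta t * tnth (Eps om) i).
  by apply/funext => om; rewrite /= /interp /vadd /vscale !tnth_mktuple.
apply: measurable_funD; apply: measurable_funM => //.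
  exact: (measurableT_comp (measurable_tnth i) mX).
exact: (measurableT_comp (measurable_tnth i) mE).
Qed.

Lemma meas_g {R : realType} {d : nat} (u tv : d.-tuple R -> d.-tuple R) :
  measurable_fun [set: d.-tuple R] u -> measurable_fun [set: d.-tuple R] tv ->
  measurable_fun [set: d.-tuple R] (fun z => (sqnorm (vsub (u z) (tv z)))%:E).
Proof.
move=> mu mv; apply/measurable_EFinP.
rewrite /sqnorm.
apply: measurable_sum => i.
have -> : (fun z => tnth (vsub (u z) (tv z)) i ^+ 2) =
   (fun z => (tnth (u z) i - tnth (tv z) i) ^+ 2).
  by apply/funext => z; rewrite /vsub tnth_mktuple.
apply: measurable_funX; apply: measurable_funB.
  exact: (measurableT_comp (measurable_tnth i) mu).
exact: (measurableT_comp (measurable_tnth i) mv).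
Qed.


Lemma sqnorm_ge0 {R : realType} {d : nat} (x : d.-tuple R) : 0 <= sqnorm x.
Proof. by apply: sumr_ge0 => i _; exact: sqr_ge0. Qed.

Lemma push_eq {R : realType} {d : nat} {dO} {O : measurableType dO}
  (P : probability O R) (alpha beta : R -> R) (X Eps : O -> d.-tuple R)
  (g : R -> R -> d.-tuple R -> R) :
  measurable_fun [set: O] X -> measurable_fun [set: O] Eps ->
  (forall t r, measurable_fun [set: d.-tuple R] (fun z => (g t r z)%:E)) ->
  (forall t r z, 0 <= g t r z) ->
  (\int[@lebesgue_measure R]_(t in `[0%R, 1%R]) \int[@lebesgue_measure R]_(r in `[0%R, 1%R])
     \int[P]_(om in [set: O]) (g t r (interp alpha beta X Eps t om))%:E =
  \int[@lebesgue_measure R]_(t in `[0%R, 1%R]) \int[@lebesgue_measure R]_(r in `[0%R, 1%R])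
     \int[pushforward P (interp alpha beta X Eps t)]_(z in [set: d.-tuple R]) (g t r z)%:E)%E.
Proof.
move=> mX mE mg g0.
apply: eq_integral => t _; apply: eq_integral => r _.
rewrite (@ge0_integral_pushforward _ _ _ _ R _ (meas_interp alpha beta X Eps t mX mE)).
- by rewrite preimage_setT.
- exact: measurableT.
- exact: mg.
- by move=> z _; rewrite lee_fin.
Qed.

Theorem theorem3p22
  (R : realType) (d : nat) (dO : measure_display) (O : measurableType dO)
  (P : probability O R) (X Eps : O -> d.-tuple R)
  (mu : d.-tuple R) (sigma : R) (alpha beta : R -> R)
  (v a : d.-tuple R -> R -> d.-tuple R)
  (Phi : d.-tuple R -> R -> R -> d.-tuple R)
  (Th1 Th2 : Type)
  (u1 : Th1 -> d.-tuple R -> R -> R -> d.-tuple R)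
  (u2 : Th2 -> d.-tuple R -> R -> R -> d.-tuple R) :
  (* data and noise *)
  measurable_fun [set: O] X -> measurable_fun [set: O] Eps ->
  indep2 P X Eps ->
  0 < sigma -> iso_gaussian P Eps mu sigma ->
  (* interpolation functions, twice differentiable *)
  alpha 0 = 1 -> beta 1 = 1 -> alpha 1 = 0 -> beta 0 = 0 ->
  (forall t, derivable alpha t 1 /\ derivable (derive1 alpha) t 1) ->
  (forall t, derivable beta t 1 /\ derivable (derive1 beta) t 1) ->
  (* marginal velocity and acceleration: E[v_t | z_t = z], E[a_t | z_t = z] *)
  (forall t, 0 <= t <= 1 ->
     cond_exp_version P
       (fun om => vadd (vscale (derive1 alpha t) (X om)) (vscale (derive1 beta t) (Eps om)))
       (interp alpha beta X Eps t) (fun z => v z t)) ->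
  (forall t, 0 <= t <= 1 ->
     cond_exp_version P
       (fun om => vadd (vscale (derive1 (derive1 alpha) t) (X om)) (vscale (derive1 (derive1 beta) t) (Eps om)))
       (interp alpha beta X Eps t) (fun z => a z t)) ->
  (* Phi is the flow of the marginal velocity field *)
  (forall z t, Phi z t t = z) ->
  (forall z t s tau, Phi (Phi z t s) s tau = Phi z t tau) ->
  (forall z t tau (i : 'I_d), derivable (fun s => tnth (Phi z t s) i) tau 1 /\
     derive1 (fun s => tnth (Phi z t s) i) tau = tnth (v (Phi z t tau) tau) i) ->
  (* smoothness / regularity *)
  (forall z t (i : 'I_d), continuous (fun tau => tnth (v (Phi z t tau) tau) i)) ->
  (forall z t (i : 'I_d), continuous (fun tau => tnth (a (Phi z t tau) tau) i)) ->
  (forall r t, measurable_fun [set: d.-tuple R] (fun z => avg_field v Phi z r t)) ->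
  (forall r t, measurable_fun [set: d.-tuple R] (fun z => avg_field a Phi z r t)) ->
  (forall th r t, measurable_fun [set: d.-tuple R] (fun z => u1 th z r t)) ->
  (forall th r t, measurable_fun [set: d.-tuple R] (fun z => u2 th z r t)) ->
  equiv_losses
    (L_SOM P alpha beta X Eps (mf_target v Phi) (mf_target a Phi) u1 u2)
    (L_SOM_star P alpha beta X Eps (avg_field v Phi) (avg_field a Phi) u1 u2).

Proof.
move=> mX mE _ _ _ _ _ _ _ _ _ _ _ H0 Hf Hd Hcv Hca mav maa mu1 mu2.
exists 0%R => th; rewrite adde0.
have ev : mf_target v Phi = avg_field v Phi.
  apply/funext => z; apply/funext => r; apply/funext => t.
  exact: target_eq.
have ea : mf_target a Phi = avg_field a Phi.
  apply/funext => z; apply/funext => r; apply/funext => t.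
  exact: target_eq.
rewrite /L_SOM /L_SOM_star ev ea.
apply: (f_equal2 (fun x y => (x + y)%E)).
  apply: (@push_eq R d dO O P alpha beta X Eps
    (fun t r z => sqnorm (vsub (u1 th.1 z r t) (avg_field v Phi z r t))) mX mE).
    by move=> t r; exact: meas_g.
  by move=> t r z; exact: sqnorm_ge0.
apply: (@push_eq R d dO O P alpha beta X Eps
  (fun t r z => sqnorm (vsub (u2 th.2 z r t) (avg_field a Phi z r t))) mX mE).
  by move=> t r; exact: meas_g.
by move=> t r z; exact: sqnorm_ge0.
Qed.
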